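(* There is an absolute constant $K>0$ such that the following holds. Let $\mathcal U$ be a finite set, $V'\subseteq\mathbb{R}^{\mathcal U}$ a linear subspace with orthogonal projector $\Pi_{V'}$, and $c>0$ such that there is a polynomial $S$ in the variables $(f(u))_{u\in\mathcal U}$ which is a sum of squares of polynomials, of degree at most $4$, with the polynomial identity $\|\Pi_{V'}f\|_4^4=c^4\|\Pi_{V'}f\|_2^4-S(f)$. Let $f_0\in\mathbb{R}^{\mathcal U}$ be orthogonal to $V'$ with $\|f_0\|_2=1$ and $\|f_0\|_4=C>100c$, and let $V=\mathrm{span}(V'\cup\{f_0\})$. Let $\tilde{\mathbb{E}}$ be a level-$\ell$ pseudoexpectation, $\ell\ge8$, over the variables $(f(u))_{u\in\mathcal U}$ such that: $\tilde{\mathbb{E}}[L(f)Q(f)]=0$ for every linear form $L$ vanishing on $V$ and every polynomial $Q$ of degree at most $\ell-1$; $\tilde{\mathbb{E}}[(\|f\|_2^2-1)Q(f)]=0$ for every polynomial $Q$ of degree at most $\ell-2$; and $\tilde{\mathbb{E}}\|f\|_4^4\ge C^4$. Then $\tilde{\mathbb{E}}\langle f,f_0\rangle^2\ge1-Kc/C$. (In particular this holds when $\tilde{\mathbb{E}}$ is the expectation of a probability distribution over unit-norm $f\in V$ with $\|f\|_4\ge C$.)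
   Context: Norms and inner products on $\mathbb{R}^{\mathcal U}$ use the uniform (expectation) measure: $\langle g,h\rangle=\mathbb{E}_{u}g(u)h(u)$, $\|g\|_p=(\mathbb{E}_u|g(u)|^p)^{1/p}$. A level-$\ell$ pseudoexpectation is a linear functional $\tilde{\mathbb{E}}$ on real polynomials of degree at most $\ell$ in the given variables such that $\tilde{\mathbb{E}}1=1$ and $\tilde{\mathbb{E}}P^2\ge0$ for every polynomial $P$ of degree at most $\ell/2$. *)

(* Defs.v *)
From HB Require Import structures.
From mathcomp Require Import all_boot all_order all_algebra.
Set Implicit Arguments. Unset Strict Implicit. Unset Printing Implicit Defensive.
Import Order.TTheory GRing.Theory Num.Theory.
Local Open Scope ring_scope.

Definition Ex (R : rcfType) (U : finType) (g : U -> R) : R :=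
  (\sum_u g u) / (#|U|%:R).

Definition inner (R : rcfType) (U : finType) (g h : U -> R) : R :=
  Ex (fun u => g u * h u).

Definition norm2sq (R : rcfType) (U : finType) (g : U -> R) : R :=
  Ex (fun u => g u ^+ 2).
Definition norm4_4 (R : rcfType) (U : finType) (g : U -> R) : R :=
  Ex (fun u => g u ^+ 4).

Definition mono_deg (U : finType) (d : nat) (m : {ffun U -> 'I_d.+1}) : nat :=
  (\sum_u (m u : nat))%N.

Definition is_poly (R : rcfType) (U : finType) (d : nat)
    (P : (U -> R) -> R) : Prop :=
  exists a : {ffun U -> 'I_d.+1} -> R,
    forall x : U -> R,
      P x = \sum_(m : {ffun U -> 'I_d.+1} | (mono_deg m <= d)%N)
              a m * \prod_u x u ^+ (m u : nat).

Definition pseudoexp (R : rcfType) (U : finType) (l : nat)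
    (E : ((U -> R) -> R) -> R) : Prop :=
  [/\ (forall (P Q : (U -> R) -> R) (a : R),
         is_poly l P -> is_poly l Q ->
         E (fun x => a * P x + Q x) = a * E P + E Q),
      E (fun _ => 1) = 1
    & (forall P : (U -> R) -> R, is_poly l./2 P ->
         0 <= E (fun x => P x ^+ 2))].

Definition is_subspace (R : rcfType) (U : finType) (W : (U -> R) -> Prop) : Prop :=
  W (fun _ => 0) /\
  (forall (a : R) (v w : U -> R), W v -> W w -> W (fun u => a * v u + w u)).

Definition is_orth_proj (R : rcfType) (U : finType) (W : (U -> R) -> Prop)
    (Pi : (U -> R) -> (U -> R)) : Prop :=
  forall g : U -> R, W (Pi g) /\
    (forall v, W v -> inner (fun u => g u - Pi g u) v = 0).

Definition is_sos (R : rcfType) (U : finType) (S : (U -> R) -> R) : Prop :=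
  exists (k : nat) (q : 'I_k -> (U -> R) -> R),
    (forall i, exists d, is_poly d (q i)) /\
    (forall x, S x = \sum_(i < k) q i x ^+ 2).

(* Main.v *)
Require Import Defs.
From HB Require Import structures.
From mathcomp Require Import all_boot all_order all_algebra.
From mathcomp Require Import ring lra zify.
From Stdlib Require Import FunctionalExtensionality IndefiniteDescription.
Set Implicit Arguments. Unset Strict Implicit. Unset Printing Implicit Defensive.
Import Order.TTheory GRing.Theory Num.Theory.
Local Open Scope ring_scope.


Section PolyLib.
Variable R : rcfType.
Variable U : finType.
Implicit Types (P Q : (U -> R) -> R) (x : U -> R).

Definition monf (e : U -> nat) (x : U -> R) : R := \prod_u x u ^+ e u.

Lemma is_poly_ext d P Q : (forall x, P x = Q x) -> is_poly d P -> is_poly d Q.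
Proof. by move=> PQ [a Ha]; exists a => x; rewrite -PQ. Qed.

Lemma is_poly0 d : is_poly d (fun _ : U -> R => 0).
Proof. by exists (fun _ => 0) => x; rewrite big1 // => m _; rewrite mul0r. Qed.

Lemma is_polyL d a P Q : is_poly d P -> is_poly d Q ->
  is_poly d (fun x => a * P x + Q x).
Proof.
move=> [p Hp] [q Hq]; exists (fun m => a * p m + q m) => x.
rewrite Hp Hq mulr_sumr -big_split /=; apply: eq_bigr => m _.
by rewrite mulrDl mulrA.
Qed.

Lemma is_polyZ d a P : is_poly d P -> is_poly d (fun x => a * P x).
Proof.
move=> HP; apply: is_poly_ext (is_polyL a HP (is_poly0 d)) => x; by rewrite addr0.
Qed.

Lemma is_polyD d P Q : is_poly d P -> is_poly d Q -> is_poly d (fun x => P x + Q x).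
Proof.
move=> HP HQ; apply: is_poly_ext (is_polyL 1 HP HQ) => x; by rewrite mul1r.
Qed.

Lemma is_polyB d P Q : is_poly d P -> is_poly d Q -> is_poly d (fun x => P x - Q x).
Proof.
move=> HP HQ; apply: is_poly_ext (is_polyL (-1) HQ HP) => x; by rewrite addrC mulN1r.
Qed.

Lemma is_poly_sum d (I : Type) (r : seq I) (Pr : pred I) (F : I -> (U -> R) -> R) :
  (forall i, Pr i -> is_poly d (F i)) ->
  is_poly d (fun x => \sum_(i <- r | Pr i) F i x).
Proof.
move=> HF; elim: r => [|i r IH].
  by apply: is_poly_ext (is_poly0 d) => x; rewrite big_nil.
case Pi: (Pr i).
  apply: is_poly_ext (is_polyD (HF i Pi) IH) => x; by rewrite big_cons Pi.
by apply: is_poly_ext IH => x; rewrite big_cons Pi.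
Qed.

Lemma is_poly_mon d (e : U -> nat) : (\sum_u e u <= d)%N ->
  is_poly d (monf e).
Proof.
move=> He.
have eu : forall u, (e u < d.+1)%N.
  move=> u; rewrite ltnS; apply: leq_trans He.
  by rewrite (bigD1 u) //= leq_addr.
pose m0 : {ffun U -> 'I_d.+1} := [ffun u => Ordinal (eu u)].
exists (fun m => (m == m0)%:R) => x.
have dm0 : (mono_deg m0 <= d)%N.
  rewrite /mono_deg; suff -> : (\sum_u (m0 u : nat) = \sum_u e u)%N by [].
  by apply: eq_bigr => u _; rewrite /m0 ffunE.
rewrite (bigD1 m0) //=.
have -> : \sum_(m | (mono_deg m <= d)%N && (m != m0)) (m == m0)%:R * \prod_u x u ^+ m u = 0.
  by apply: big1 => m /andP [_ /negbTE ->]; rewrite mul0r.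
rewrite eqxx mul1r addr0 /monf; apply: eq_bigr => u _; by rewrite ffunE.
Qed.

Lemma is_poly_le d d' P : (d <= d')%N -> is_poly d P -> is_poly d' P.
Proof.
move=> dd [a Ha]; apply: is_poly_ext (fun x => esym (Ha x)) _.
apply: is_poly_sum => m Hm; apply: is_polyZ.
apply: is_poly_mon (leq_trans Hm dd).
Qed.

Lemma monfM e1 e2 x : monf e1 x * monf e2 x = monf (fun u => e1 u + e2 u)%N x.
Proof. by rewrite /monf -big_split /=; apply: eq_bigr => u _; rewrite exprD. Qed.

Lemma is_polyM d1 d2 P Q : is_poly d1 P -> is_poly d2 Q ->
  is_poly (d1 + d2) (fun x => P x * Q x).
Proof.
move=> [a Ha] [b Hb].
have -> : (fun x => P x * Q x) = (fun x => \sum_(m1 | (mono_deg m1 <= d1)%N)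
   \sum_(m2 | (mono_deg m2 <= d2)%N) (a m1 * b m2) * monf (fun u => m1 u + m2 u)%N x).
  apply: functional_extensionality => x; rewrite Ha Hb mulr_suml.
  apply: eq_bigr => m1 _; rewrite mulr_sumr; apply: eq_bigr => m2 _.
  by rewrite -monfM /monf; ring.
apply: is_poly_sum => m1 H1; apply: is_poly_sum => m2 H2; apply: is_polyZ.
apply: is_poly_mon; rewrite big_split /=; exact: leq_add.
Qed.

Lemma is_polyM' d d1 d2 P Q : is_poly d1 P -> is_poly d2 Q -> (d1 + d2 <= d)%N ->
  is_poly d (fun x => P x * Q x).
Proof. by move=> HP HQ le; apply: is_poly_le le (is_polyM HP HQ). Qed.

Lemma is_poly_var d u : (1 <= d)%N -> is_poly d (fun x => x u).
Proof.
move=> d1; have H := @is_poly_mon d (fun v => (v == u) : nat).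
apply: is_poly_ext (H _) => [x|].
  rewrite /monf (bigD1 u) //= eqxx expr1 big1 ?mulr1 // => v /negbTE ->.
  by rewrite expr0.
by rewrite (bigD1 u) //= eqxx big1 ?addn0 // => v /negbTE ->.
Qed.

Lemma is_poly_const d a : is_poly d (fun _ : U -> R => a).
Proof.
have H := @is_poly_mon d (fun _ => 0%N).
apply: is_poly_ext (is_polyZ a (H _)) => [x|].
  by rewrite /monf big1 ?mulr1 // => u _; rewrite expr0.
by rewrite big1.
Qed.

Definition lin (F : (U -> R) -> R) := exists w : U -> R, forall x, F x = \sum_u w u * x u.

Lemma is_poly_lin d F : (1 <= d)%N -> lin F -> is_poly d F.
Proof.
move=> d1 [w Hw]; apply: is_poly_ext (fun x => esym (Hw x)) _.
apply: is_poly_sum => u _; apply: is_polyZ; exact: is_poly_var.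
Qed.

Lemma is_polyX d k P : is_poly d P -> is_poly (d * k) (fun x => P x ^+ k).
Proof.
move=> HP; elim: k => [|k IH].
  by apply: is_poly_ext (is_poly_const _ 1) => x; rewrite expr0.
apply: is_poly_ext (is_polyM' HP IH _) => [x|]; first by rewrite exprS.
by rewrite mulnS.
Qed.

End PolyLib.

Section PolyLib2.
Variable R : rcfType.
Variable U : finType.
Implicit Types (P Q F G : (U -> R) -> R).

Lemma is_polyD' d1 d2 P Q : is_poly d1 P -> is_poly d2 Q ->
  is_poly (maxn d1 d2) (fun x => P x + Q x).
Proof.
move=> HP HQ; apply: is_polyD; [apply: (is_poly_le _ HP) | apply: (is_poly_le _ HQ)];
  by rewrite ?leq_maxl ?leq_maxr.
Qed.

Lemma is_polyB' d1 d2 P Q : is_poly d1 P -> is_poly d2 Q ->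
  is_poly (maxn d1 d2) (fun x => P x - Q x).
Proof.
move=> HP HQ; apply: is_polyB; [apply: (is_poly_le _ HP) | apply: (is_poly_le _ HQ)];
  by rewrite ?leq_maxl ?leq_maxr.
Qed.

Lemma is_polyN' d P : is_poly d P -> is_poly d (fun x => - P x).
Proof.
move=> HP; apply: is_poly_ext (is_polyB (is_poly0 _ _ _) HP) => x; by rewrite sub0r.
Qed.

Lemma is_poly_lin1 F : lin F -> is_poly 1 F.
Proof. exact: is_poly_lin. Qed.

Lemma is_poly_var1 u : is_poly 1 (fun x : U -> R => x u).
Proof. exact: is_poly_var. Qed.

Lemma is_poly_const0 (a : R) : is_poly 0 (fun _ : U -> R => a).
Proof. exact: is_poly_const. Qed.

Lemma is_poly_Ex d (F : U -> (U -> R) -> R) : (forall u, is_poly d (F u)) ->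
  is_poly d (fun x => Ex (fun u => F u x)).
Proof.
move=> HF; apply: is_poly_ext (is_polyZ (#|U|%:R^-1) (@is_poly_sum R U d U (index_enum U) xpredT F (fun u _ => HF u))) => x.
by rewrite /Ex mulrC.
Qed.

Lemma lin_ext F G : (forall x, F x = G x) -> lin F -> lin G.
Proof. by move=> FG [w Hw]; exists w => x; rewrite -FG. Qed.

Lemma lin_comb a F G : lin F -> lin G -> lin (fun x => a * F x + G x).
Proof.
move=> [w Hw] [w' Hw']; exists (fun u => a * w u + w' u) => x.
rewrite Hw Hw' mulr_sumr -big_split; apply: eq_bigr => u _ /=; ring.
Qed.

Lemma lin_var u : lin (fun x : U -> R => x u).
Proof.
exists (fun v => (v == u)%:R) => x.
rewrite (bigD1 u) //= eqxx mul1r big1 ?addr0 // => v /negbTE ->; by rewrite mul0r.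
Qed.

Lemma is_poly_norm2 (G : (U -> R) -> U -> R) : (forall u, lin (fun x => G x u)) ->
  is_poly 2 (fun x => norm2sq (G x)).
Proof.
move=> HG; apply: (@is_poly_Ex 2 (fun u x => G x u ^+ 2)) => u.
exact: (is_polyX 2 (is_poly_lin1 (HG u))).
Qed.

Lemma is_poly_norm4 (G : (U -> R) -> U -> R) : (forall u, lin (fun x => G x u)) ->
  is_poly 4 (fun x => norm4_4 (G x)).
Proof.
move=> HG; apply: (@is_poly_Ex 4 (fun u x => G x u ^+ 4)) => u.
exact: (is_polyX 4 (is_poly_lin1 (HG u))).
Qed.

End PolyLib2.

Ltac pdeg F :=
  lazymatch F with
  | (fun _ => ?c) => constr:(0%N)
  | (fun x => @?A x + @?B x) =>
      let a := pdeg A in let b := pdeg B in constr:(maxn a b)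
  | (fun x => @?A x - @?B x) =>
      let a := pdeg A in let b := pdeg B in constr:(maxn a b)
  | (fun x => - @?A x) => pdeg A
  | (fun x => @?A x * @?B x) =>
      let a := pdeg A in let b := pdeg B in constr:((a + b)%N)
  | (fun x => @?A x ^+ ?k) =>
      let a := pdeg A in constr:((a * k)%N)
  | (fun x => norm2sq (@?G x)) => constr:(2%N)
  | (fun x => norm4_4 (@?G x)) => constr:(4%N)
  | _ => lazymatch goal with
         | H : is_poly ?d F |- _ => constr:(d)
         | _ => lazymatch F with
                | (fun x => ?G x) => lazymatch goal with
                                     | H : is_poly ?d G |- _ => constr:(d)
                                     | _ => constr:(1%N) end
                | _ => constr:(1%N) end
         end
  end.

Ltac pleaf := fail.
Ltac plin := fail.

Ltac pbuild :=
  lazymatch goal with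
  | |- is_poly _ (fun _ => ?c) => apply: is_poly_const0
  | |- is_poly _ (fun x => @?A x + @?B x) =>
      let a := pdeg A in let b := pdeg B in
      apply: (@is_polyD' _ _ a b A B); pbuild
  | |- is_poly _ (fun x => @?A x - @?B x) =>
      let a := pdeg A in let b := pdeg B in
      apply: (@is_polyB' _ _ a b A B); pbuild
  | |- is_poly _ (fun x => - @?A x) =>
      let a := pdeg A in
      apply: (@is_polyN' _ _ a A); pbuild
  | |- is_poly _ (fun x => @?A x * @?B x) =>
      let a := pdeg A in let b := pdeg B in
      apply: (@is_polyM _ _ a b A B); pbuild
  | |- is_poly _ (fun x => @?A x ^+ ?k) =>
      let a := pdeg A in
      apply: (@is_polyX _ _ a k A); pbuild
  | |- is_poly _ (fun x => x ?u) => apply: is_poly_var1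
  | |- is_poly _ (fun x => norm2sq (@?G x)) => apply: (@is_poly_norm2 _ _ G) => ?; plin
  | |- is_poly _ (fun x => norm4_4 (@?G x)) => apply: (@is_poly_norm4 _ _ G) => ?; plin
  | |- _ => first [eassumption | pleaf]
  end.

Ltac psolve :=
  lazymatch goal with
  | |- is_poly ?d ?F =>
     let e := pdeg F in
     apply: (@is_poly_le _ _ e d F); [lia | pbuild]
  end.


Lemma poly_eq0_all (R : numFieldType) (p : {poly R}) :
  (forall s, p.[s] = 0) -> p = 0.
Proof.
move=> H; apply/eqP; apply/negPn/negP => p0.
pose rs := [seq i%:R | i <- iota 0 (size p)] : seq R.
have H1 : all (root p) rs by apply/allP => z /mapP [i _ ->]; rewrite /root H.
have H2 : uniq rs.
  by rewrite map_inj_uniq ?iota_uniq // => i j /eqP; rewrite eqr_nat => /eqP.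
by have := max_poly_roots p0 H1 H2; rewrite size_map size_iota ltnn.
Qed.

Section SosDeg.
Variable R : rcfType.
Variable U : finType.

Notation mon m x := (\prod_u x u ^+ m u).

Lemma mon_scale d (m : {ffun U -> 'I_d.+1}) (s : R) (x : U -> R) :
  \prod_u (s * x u) ^+ m u = s ^+ mono_deg m * \prod_u x u ^+ m u.
Proof.
rewrite /mono_deg -prodrXr -big_split /=; apply: eq_bigr => u _.
by rewrite exprMn.
Qed.

Lemma sos_step (k D : nat) (q : 'I_k -> (U -> R) -> R) (S : (U -> R) -> R) :
  (2 < D)%N -> is_poly 4 S -> (forall x, S x = \sum_(i < k) q i x ^+ 2) ->
  (forall i, is_poly D (q i)) -> forall i, is_poly D.-1 (q i).
Proof.
move=> D3 [b Hb] HS Hq.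
pose a i := proj1_sig (constructive_indefinite_description _ (Hq i)).
have Ha : forall i x, q i x = \sum_(m | (mono_deg m <= D)%N) a i m * mon m x.
  by move=> i x; rewrite /a; case: constructive_indefinite_description.
pose top i x := \sum_(m : {ffun U -> 'I_D.+1} | mono_deg m == D) a i m * mon m x.
pose low i x := \sum_(m : {ffun U -> 'I_D.+1} | (mono_deg m < D)%N) a i m * mon m x.
have Hsplit : forall i x, q i x = top i x + low i x.
  move=> i x; rewrite Ha (bigID (fun m => mono_deg m == D)) /=; congr (_ + _).
    by apply: eq_bigl => m; case: eqP => [->|]; rewrite ?leqnn ?andbF ?andbT.
  by apply: eq_bigl => m; rewrite ltn_neqAle andbC.
have Htop : forall i x, top i x = 0.
  move=> i0 x.
  pose Qp i := \sum_(m | (mono_deg m <= D)%N) (a i m * mon m x) *: 'X^(mono_deg m).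
  pose Sp := \sum_(m : {ffun U -> 'I_4.+1} | (mono_deg m <= 4)%N) (b m * mon m x) *: 'X^(mono_deg m).
  pose P := \sum_(i < k) Qp i ^+ 2 - Sp.
  have P0 : P = 0.
    apply: poly_eq0_all => s.
    rewrite /P hornerD hornerN horner_sum.
    have -> : Sp.[s] = S (fun u => s * x u).
      rewrite Hb /Sp horner_sum; apply: eq_bigr => m _.
      by rewrite hornerZ hornerXn mon_scale mulrA mulrAC.
    apply/eqP; rewrite subr_eq0 HS; apply/eqP; apply: eq_bigr => i _.
    rewrite horner_exp Ha /Qp horner_sum; congr (_ ^+ 2); apply: eq_bigr => m _.
    by rewrite hornerZ hornerXn mon_scale mulrA mulrAC.
  pose T i := top i x *: ('X^D : {poly R}).
  pose L i := \sum_(m | (mono_deg m < D)%N) (a i m * mon m x) *: ('X^(mono_deg m) : {poly R}).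
  have QTL : forall i, Qp i = T i + L i.
    move=> i; rewrite /Qp (bigID (fun m => mono_deg m == D)) /=; congr (_ + _).
      rewrite /T /top scaler_suml; rewrite (eq_bigl (fun m => mono_deg m == D)).
        by apply: eq_bigr => m /eqP ->.
      by move=> m; case: eqP => [->|]; rewrite ?leqnn ?andbF ?andbT.
    by apply: eq_bigl => m; rewrite ltn_neqAle andbC.
  have sL : forall i, (size (L i) <= D)%N.
    move=> i; apply: leq_trans (size_sum _ _ _) _; apply/bigmax_leqP => m Hm.
    by apply: leq_trans (size_scale_leq _ _) _; rewrite size_polyXn.
  have sT : forall i, (size (T i) <= D.+1)%N.
    by move=> i; apply: leq_trans (size_scale_leq _ _) _; rewrite size_polyXn.
  have sSp : (size Sp <= 5)%N.
    apply: leq_trans (size_sum _ _ _) _; apply/bigmax_leqP => m Hm.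
    by apply: leq_trans (size_scale_leq _ _) _; rewrite size_polyXn ltnS.
  have coefQ : forall i, (Qp i ^+ 2)`_(D + D) = top i x ^+ 2.
    move=> i; rewrite QTL expr2 mulrDl !mulrDr !coefD.
    have z1 : (T i * L i)`_(D + D) = 0.
      apply: nth_default; apply: leq_trans (size_polyMleq _ _) _.
      have := leq_add (sT i) (sL i); lia.
    have z2 : (L i * T i)`_(D + D) = 0.
      apply: nth_default; apply: leq_trans (size_polyMleq _ _) _.
      have := leq_add (sL i) (sT i); lia.
    have z3 : (L i * L i)`_(D + D) = 0.
      apply: nth_default; apply: leq_trans (size_polyMleq _ _) _.
      have := leq_add (sL i) (sL i); lia.
    rewrite z1 z2 z3 !addr0 /T -scalerAl -scalerAr scalerA.
    by rewrite -exprD coefZ coefXn eqxx mulr1 expr2.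
  have : P`_(D + D) = 0 by rewrite P0 coef0.
  rewrite /P coefB coef_sum (nth_default _ (leq_trans sSp _)); last first.
    lia.
  rewrite subr0 (eq_bigr _ (fun i _ => coefQ i)) => Hs.
  have := @psumr_eq0P _ _ xpredT (fun i => top i x ^+ 2) (fun i _ => sqr_ge0 _) Hs i0.
  by move=> /(_ isT) /eqP; rewrite sqrf_eq0 => /eqP.
move=> i.
have -> : q i = low i by apply: functional_extensionality => x; rewrite Hsplit Htop add0r.
apply: is_poly_sum => m Hm; apply: is_polyZ.
have := @is_poly_mon R U D.-1 (fun u => m u); rewrite /monf; apply.
by rewrite -ltnS (ltn_predK D3).
Qed.

Lemma sos_deg2 (k : nat) (q : 'I_k -> (U -> R) -> R) (S : (U -> R) -> R) :
  is_poly 4 S -> (forall x, S x = \sum_(i < k) q i x ^+ 2) ->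
  (forall i, exists d, is_poly d (q i)) -> forall i, is_poly 2 (q i).
Proof.
move=> HS Hsum Hq.
pose d i := proj1_sig (constructive_indefinite_description _ (Hq i)).
have Hd : forall i, is_poly (d i) (q i).
  by move=> i; rewrite /d; case: constructive_indefinite_description.
have HD : forall i, is_poly (\max_j d j) (q i).
  by move=> i; apply: is_poly_le (Hd i); apply: leq_bigmax.
elim: (\max_j d j) HD => [|D IH] H.
  by move=> i; apply: is_poly_le (H i).
case: (leqP D.+1 2) => D2.
  by move=> i; apply: is_poly_le (H i).
by apply: IH; apply: sos_step D2 HS Hsum H.
Qed.

End SosDeg.


Section ELemmas.
Variable R : rcfType.
Variable U : finType.
Variable l : nat.
Variable E : ((U -> R) -> R) -> R.
Hypothesis HE : pseudoexp l E.
Implicit Types (P Q : (U -> R) -> R).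

Lemma E_ext P Q : (forall x, P x = Q x) -> E P = E Q.
Proof. by move=> H; congr E; apply: functional_extensionality. Qed.

Lemma E_L a P Q : is_poly l P -> is_poly l Q -> E (fun x => a * P x + Q x) = a * E P + E Q.
Proof. by case: HE => H _ _; apply: H. Qed.

Lemma E0 : E (fun _ => 0) = 0.
Proof.
have := @E_L 1 (fun _ => 0) (fun _ => 0) (is_poly0 _ _ _) (is_poly0 _ _ _).
rewrite (@E_ext (fun _ => 1 * 0 + 0) (fun _ => 0)) => [|x]; last by rewrite mul1r addr0.
by rewrite mul1r => H; lra.
Qed.

Lemma E_Z a P : is_poly l P -> E (fun x => a * P x) = a * E P.
Proof.
move=> HP; rewrite -[RHS]addr0 -E0 -E_L //; last exact: is_poly0.
by apply: E_ext => x; rewrite addr0.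
Qed.

Lemma E_D P Q : is_poly l P -> is_poly l Q -> E (fun x => P x + Q x) = E P + E Q.
Proof.
move=> HP HQ; rewrite -[E P]mul1r -E_L //; by apply: E_ext => x; rewrite mul1r.
Qed.

Lemma E_B P Q : is_poly l P -> is_poly l Q -> E (fun x => P x - Q x) = E P - E Q.
Proof.
move=> HP HQ; rewrite addrC -mulN1r -E_L //; by apply: E_ext => x; rewrite mulN1r addrC.
Qed.

Lemma E_sum (I : Type) (r : seq I) (Pr : pred I) (F : I -> (U -> R) -> R) :
  (forall i, Pr i -> is_poly l (F i)) ->
  E (fun x => \sum_(i <- r | Pr i) F i x) = \sum_(i <- r | Pr i) E (F i).
Proof.
move=> HF; elim: r => [|i r IH].
  rewrite big_nil -[RHS]E0; apply: E_ext => x; by rewrite big_nil.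
rewrite big_cons; case Pi: (Pr i).
  rewrite -IH -E_D //; last exact: is_poly_sum.
    by apply: E_ext => x; rewrite big_cons Pi.
  by apply: HF.
by rewrite -IH; apply: E_ext => x; rewrite big_cons Pi.
Qed.

Lemma E_const a : E (fun _ => a) = a.
Proof.
case: HE => _ E1 _; rewrite -[RHS]mulr1 -E1 -E_Z; last exact: is_poly_const.
by apply: E_ext => x; rewrite mulr1.
Qed.

Lemma E_sq P : (4 <= l)%N -> is_poly 2 P -> 0 <= E (fun x => P x ^+ 2).
Proof.
move=> l8 HP; case: HE => _ _; apply; apply: is_poly_le HP; lia.
Qed.

End ELemmas.


Section Proj.
Variables (R : rcfType) (U : finType) (V' : (U -> R) -> Prop) (Pi : (U -> R) -> (U -> R)).
Hypotheses (HV' : is_subspace V') (HPi : is_orth_proj V' Pi).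
Hypothesis (n0 : (0 < #|U|)%N).

Let n := #|U|%:R : R.
Lemma n_neq0 : n != 0.
Proof. by rewrite /n pnatr_eq0 -lt0n. Qed.

Lemma inner_eq0 (g : U -> R) : inner g g = 0 -> forall u, g u = 0.
Proof.
rewrite /inner /Ex => /eqP; rewrite mulf_eq0 invr_eq0 (negbTE n_neq0) orbF => /eqP H u.
have := @psumr_eq0P _ _ xpredT (fun u => g u * g u) _ H u.
rewrite /= => /(_ (fun i _ => (sqr_ge0 _ : 0 <= _ * _)) isT) /eqP; rewrite mulf_eq0 orbb => /eqP.
done.
Qed.

Lemma sub_comb a v w : V' v -> V' w -> V' (fun u => a * v u + w u).
Proof. by case: HV' => _; apply. Qed.

Lemma sub0 : V' (fun _ => 0).
Proof. by case: HV'. Qed.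

Lemma sub_sum (r : seq U) (a : U -> R) (h : U -> U -> R) :
  (forall v, V' (h v)) -> V' (fun u => \sum_(v <- r) a v * h v u).
Proof.
move=> Hh; elim: r => [|v r IH].
  have -> : (fun u => \sum_(v <- [::]) a v * h v u) = (fun _ => 0) :> (U -> R).
    by apply: functional_extensionality => u; rewrite big_nil.
  exact: sub0.
have -> : (fun u => \sum_(v0 <- v :: r) a v0 * h v0 u) =
          (fun u => a v * h v u + \sum_(v0 <- r) a v0 * h v0 u).
  by apply: functional_extensionality => u; rewrite big_cons.
exact: sub_comb.
Qed.

Lemma proj_unique (g p : U -> R) : V' p ->
  (forall w, V' w -> inner (fun u => g u - p u) w = 0) -> Pi g = p.
Proof.
move=> Vp Hp; case: (HPi g) => VPg HPg.
pose d := fun u => Pi g u - p u.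
have Vd : V' d.
  have -> : d = (fun u => (-1) * p u + Pi g u).
    by apply: functional_extensionality => u; rewrite /d mulN1r addrC.
  exact: sub_comb.
have : inner d d = inner (fun u => g u - p u) d - inner (fun u => g u - Pi g u) d.
  rewrite /inner /Ex -mulrBl -sumrB; congr (_ * _); apply: eq_bigr => u _.
  rewrite /d; ring.
rewrite Hp // HPg // subrr => /inner_eq0 H.
apply: functional_extensionality => u; apply/eqP; rewrite -subr_eq0; apply/eqP.
exact: H.
Qed.

Definition delta (v : U) : U -> R := fun u => (u == v)%:R.

Lemma expand (x : U -> R) u : x u = \sum_v x v * delta v u.
Proof.
rewrite (bigD1 u) //= /delta eqxx mulr1 big1 ?addr0 // => v.
by rewrite eq_sym => /negbTE ->; rewrite mulr0.
Qed.

Lemma Pi_lin (x : U -> R) u : Pi x u = \sum_v x v * Pi (delta v) u.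
Proof.
suff -> : Pi x = (fun u => \sum_v x v * Pi (delta v) u) by [].
apply: proj_unique; first by apply: sub_sum => v; case: (HPi (delta v)).
move=> w Vw.
have : forall v, \sum_u (delta v u - Pi (delta v) u) * w u = 0.
  move=> v; case: (HPi (delta v)) => _ /(_ w Vw); rewrite /inner /Ex => /eqP.
  by rewrite mulf_eq0 invr_eq0 (negbTE n_neq0) orbF => /eqP.
move=> H0; rewrite /inner /Ex.
have -> : \sum_u (x u - \sum_v x v * Pi (delta v) u) * w u =
   \sum_v x v * \sum_u (delta v u - Pi (delta v) u) * w u.
  rewrite (eq_bigr (fun u => \sum_v x v * ((delta v u - Pi (delta v) u) * w u))).
    by rewrite exchange_big /=; apply: eq_bigr => v _; rewrite mulr_sumr.
  move=> z _; rewrite {1}(expand x z) -sumrB mulr_suml; apply: eq_bigr => v _; ring.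
by rewrite big1 ?mul0r // => v _; rewrite H0 mulr0.
Qed.

End Proj.


Section Main.
Variables (R : rcfType) (U : finType) (V' : (U -> R) -> Prop) (Pi : (U -> R) -> (U -> R)) (c : R).
Hypotheses (HV' : is_subspace V') (HPi : is_orth_proj V' Pi) (c0 : 0 < c).
Variable S : (U -> R) -> R.
Hypotheses (HS4 : is_poly 4 S) (HSsos : is_sos S)
  (HSid : forall f, norm4_4 (Pi f) = c ^+ 4 * (norm2sq (Pi f)) ^+ 2 - S f).
Variables (f0 : U -> R) (C : R).
Hypotheses (Hf0 : forall v, V' v -> inner f0 v = 0) (Hf0n : norm2sq f0 = 1)
  (C0 : 0 <= C) (HC4 : norm4_4 f0 = C ^+ 4) (HcC : 100 * c < C).
Variable V : (U -> R) -> Prop.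
Hypothesis HV : forall g, V g <-> exists v t, V' v /\ g = (fun u => v u + t * f0 u).
Variables (l : nat) (E : ((U -> R) -> R) -> R).
Hypotheses (l8 : (8 <= l)%N) (HE : pseudoexp l E)
  (HEL : forall w : U -> R, (forall v, V v -> \sum_u w u * v u = 0) ->
       forall Q, is_poly l.-1 Q -> E (fun x => (\sum_u w u * x u) * Q x) = 0)
  (HEN : forall Q, is_poly (l - 2) Q -> E (fun x => (norm2sq x - 1) * Q x) = 0)
  (HE4 : C ^+ 4 <= E (fun x => norm4_4 x)).

Lemma Upos : (0 < #|U|)%N.
Proof.
rewrite lt0n; apply/negP => /eqP H; move: Hf0n; rewrite /norm2sq /Ex H invr0 mulr0.
by move/eqP; rewrite eq_sym oner_eq0.
Qed.

Let n := #|U|%:R : R.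
Lemma npos : 0 < n.
Proof. by rewrite /n ltr0n Upos. Qed.

Lemma nne0 : n != 0.
Proof. exact: lt0r_neq0 npos. Qed.

Lemma Eext (P Q : (U -> R) -> R) : (forall x, P x = Q x) -> E P = E Q.
Proof. exact: E_ext. Qed.

Definition tt (x : U -> R) := inner x f0.
Definition yy (x : U -> R) := fun u => Pi x u + tt x * f0 u.

Lemma lin_t : lin tt.
Proof.
exists (fun u => f0 u / n) => x; rewrite /tt /inner /Ex mulr_suml.
by apply: eq_bigr => u _; rewrite /n; ring.
Qed.

Lemma lin_Pi u : lin (fun x => Pi x u).
Proof.
exists (fun v => Pi (@delta R U v) u) => x; rewrite (Pi_lin HV' HPi Upos).
by apply: eq_bigr => v _; rewrite mulrC.
Qed.

Lemma lin_y u : lin (fun x => yy x u).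
Proof.
apply: lin_ext (lin_comb (f0 u) lin_t (lin_Pi u)) => x; rewrite /yy; ring.
Qed.

Lemma lin_L u : lin (fun x => x u - yy x u).
Proof.
apply: lin_ext (lin_comb (-1) (lin_y u) (lin_var _ u)) => x; ring.
Qed.

Ltac plin ::= first [exact: lin_t | exact: lin_Pi | exact: lin_y | exact: lin_L | exact: lin_var].
Ltac pleaf ::= first [ apply: is_poly_lin1; plin | exact: HS4 ].

Lemma inner_sym (g h : U -> R) : inner g h = inner h g.
Proof. by rewrite /inner /Ex; congr (_ * _); apply: eq_bigr => u _; rewrite mulrC. Qed.

Lemma sum_Pi_f0 x : \sum_u Pi x u * f0 u = 0.
Proof.
case: (HPi x) => VP _; have := Hf0 VP; rewrite inner_sym /inner /Ex => /eqP.
by rewrite mulf_eq0 invr_eq0 (negbTE nne0) orbF => /eqP.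
Qed.

Lemma sum_f0sq : \sum_u f0 u ^+ 2 = n.
Proof.
move: Hf0n; rewrite /norm2sq /Ex => H.
by rewrite -[RHS]mul1r -H -mulrA mulVf ?mulr1 // nne0.
Qed.

Lemma Ny_split x : norm2sq (yy x) = norm2sq (Pi x) + tt x ^+ 2.
Proof.
have h : \sum_u yy x u ^+ 2 = \sum_u Pi x u ^+ 2 + (2 * tt x) * \sum_u Pi x u * f0 u
    + tt x ^+ 2 * \sum_u f0 u ^+ 2.
  rewrite !mulr_sumr -!big_split; apply: eq_bigr => u _ /=; rewrite /yy; ring.
rewrite /norm2sq /Ex h sum_Pi_f0 sum_f0sq mulr0 addr0 mulrDl; congr (_ + _).
by rewrite -/n -mulrA mulfV ?mulr1 // nne0.
Qed.

Lemma Lvanish u v : V v -> v u - yy v u = 0.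
Proof.
case/HV => v' [s [Vv' ->]].
have Pv : Pi (fun u => v' u + s * f0 u) = v'.
  apply: (proj_unique HV' HPi Upos) => // w Vw.
  have -> : inner (fun u => v' u + s * f0 u - v' u) w = s * inner f0 w.
    rewrite /inner /Ex mulrA mulr_sumr; congr (_ * _); apply: eq_bigr => z _; ring.
  by rewrite Hf0 // mulr0.
have tv : tt (fun u => v' u + s * f0 u) = s.
  have := Hf0 Vv'; rewrite inner_sym /tt /inner /Ex => H.
  have -> : \sum_u (v' u + s * f0 u) * f0 u = \sum_u v' u * f0 u + s * \sum_u f0 u ^+ 2.
    rewrite mulr_sumr -big_split; apply: eq_bigr => z _ /=; ring.
  rewrite mulrDl H add0r sum_f0sq -mulrA mulfV ?mulr1 //; exact: nne0.
by rewrite /yy Pv tv subrr.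
Qed.

Lemma E_Lres u Q : is_poly l.-1 Q -> E (fun x => (x u - yy x u) * Q x) = 0.
Proof.
move=> HQ; have [w Hw] := lin_L u.
rewrite (Eext (Q := fun x => (\sum_u w u * x u) * Q x)); last by move=> x; rewrite Hw.
apply: HEL => // v Vv; rewrite -Hw; exact: Lvanish.
Qed.

Lemma E_norm Q : is_poly 2 Q -> E (fun x => (norm2sq x - 1) * Q x) = 0.
Proof. by move=> HQ; apply: HEN; apply: is_poly_le HQ; lia. Qed.

Lemma E_Nxy Q : is_poly 2 Q -> E (fun x => (norm2sq x - norm2sq (yy x)) * Q x) = 0.
Proof.
move=> HQ.
rewrite (Eext (Q := fun x => \sum_u (x u - yy x u) * ((x u + yy x u) * Q x * n^-1))); last first.
  move=> x; rewrite /norm2sq /Ex -mulrBl -sumrB mulr_suml mulr_suml.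
  by apply: eq_bigr => u _; ring.
rewrite (E_sum HE) //; last by move=> u _; psolve.
by rewrite big1 // => u _; apply: E_Lres; psolve.
Qed.

Lemma E_X4 : E (fun x => norm4_4 x) = E (fun x => norm4_4 (yy x)).
Proof.
apply/eqP; rewrite -subr_eq0 -(E_B HE) //; try psolve.
rewrite (Eext (Q := fun x => \sum_u (x u - yy x u) *
   ((x u ^+ 3 + x u ^+ 2 * yy x u + x u * yy x u ^+ 2 + yy x u ^+ 3) * n^-1))); last first.
  move=> x; rewrite /norm4_4 /Ex -mulrBl -sumrB mulr_suml.
  by apply: eq_bigr => u _; ring.
rewrite (E_sum HE) //; last by move=> u _; psolve.
by rewrite big1 // => u _; apply: E_Lres; psolve.
Qed.

Lemma E_sqk (P : (U -> R) -> R) k : 0 <= k -> is_poly 2 P -> 0 <= E (fun x => P x ^+ 2 * k).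
Proof.
move=> k0 HP; rewrite (Eext (Q := fun x => k * P x ^+ 2)); last by move=> x; rewrite mulrC.
rewrite (E_Z HE); last by psolve.
apply: mulr_ge0 k0 (E_sq HE _ HP); lia.
Qed.

Lemma Ngt2 x : \sum_u (tt x * Pi x u) ^+ 2 * n^-1 = norm2sq (Pi x) * tt x ^+ 2.
Proof.
rewrite /norm2sq /Ex !mulr_suml; apply: eq_bigr => u _; ring.
Qed.

Lemma P_sumsq : is_poly 4 (fun x => \sum_u (tt x * Pi x u) ^+ 2 * n^-1).
Proof. by apply: is_poly_sum => u _; psolve. Qed.

Lemma E_sumsq : 0 <= E (fun x => \sum_u (tt x * Pi x u) ^+ 2 * n^-1).
Proof.
rewrite (E_sum HE); last by move=> u _; psolve.
apply: sumr_ge0 => u _; apply: E_sqk; last by psolve.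
by rewrite invr_ge0 ltW // npos.
Qed.

Lemma E_t4 : E (fun x => tt x ^+ 4) <= E (fun x => tt x ^+ 2).
Proof.
have Psum := P_sumsq.
rewrite -subr_ge0 -(E_B HE); try psolve.
rewrite (Eext (Q := fun x => (norm2sq x - norm2sq (yy x)) * tt x ^+ 2
   - (norm2sq x - 1) * tt x ^+ 2 + \sum_u (tt x * Pi x u) ^+ 2 * n^-1)); last first.
  by move=> x; rewrite Ngt2 Ny_split; ring.
rewrite (E_D HE); try psolve.
rewrite (E_B HE); try psolve.
rewrite E_Nxy; last by psolve.
rewrite E_norm; last by psolve.
by rewrite subrr add0r E_sumsq.
Qed.

Lemma E_g4 : E (fun x => norm2sq (Pi x) ^+ 2) <= 1.
Proof.
have Psum := P_sumsq.
rewrite -subr_ge0 -{1}(E_const HE 1) -(E_B HE); try psolve.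
rewrite (Eext (Q := fun x => ((norm2sq x - norm2sq (yy x)) * (1 + norm2sq (Pi x))
   - (norm2sq x - 1) * (1 + norm2sq (Pi x))) + (tt x ^+ 2 + \sum_u (tt x * Pi x u) ^+ 2 * n^-1))); last first.
  by move=> x; rewrite Ngt2 Ny_split; ring.
rewrite (E_D HE); try psolve.
rewrite (E_B HE); try psolve.
rewrite E_Nxy; last by psolve.
rewrite E_norm; last by psolve.
rewrite subrr add0r (E_D HE); try psolve.
apply: addr_ge0; last exact: E_sumsq.
have := @E_sqk tt 1 ler01; rewrite (Eext (Q := fun x => tt x ^+ 2)) //.
  by apply; psolve.
by move=> x; rewrite mulr1.
Qed.

Lemma E_S : 0 <= E S.
Proof.
case: HSsos => k [q [Hq HSq]].
have Hq2 := sos_deg2 HS4 HSq Hq.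
rewrite (Eext (Q := fun x => \sum_(i < k) q i x ^+ 2)) // (E_sum HE); last first.
  move=> i _; have := Hq2 i => H; psolve.
apply: sumr_ge0 => i _ /=; have l4 : (4 <= l)%N by lia.
exact: (E_sq HE l4 (Hq2 i)).
Qed.

Lemma E_F4 : E (fun x => norm4_4 (Pi x)) <= c ^+ 4 * E (fun x => norm2sq (Pi x) ^+ 2).
Proof.
rewrite (Eext (Q := fun x => c ^+ 4 * norm2sq (Pi x) ^+ 2 - S x)); last by move=> x; rewrite HSid.
rewrite (E_B HE); try psolve.
rewrite (E_Z HE); last by psolve.
by rewrite lerBlDr lerDl E_S.
Qed.

Section Jen.
Variable th : R.
Hypotheses (th0 : 0 < th) (th1 : th < 1).
Let e := 1 - th.
Let ai x u := tt x * f0 u / th.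
Let bi x u := Pi x u / e.
Definition Jf x u :=
  (ai x u ^+ 2 - bi x u ^+ 2) ^+ 2 * (th * e / n) +
  ((ai x u - bi x u) * ai x u) ^+ 2 * (th ^+ 2 * e / n) +
  ((ai x u - bi x u) * bi x u) ^+ 2 * (th * e ^+ 2 / n) +
  ((ai x u - bi x u) * yy x u) ^+ 2 * (th * e / n).

Lemma e0 : 0 < e.
Proof. by rewrite /e subr_gt0. Qed.

Lemma P_J : is_poly 4 (fun x => \sum_u Jf x u).
Proof. apply: is_poly_sum => u _; rewrite /Jf /ai /bi; psolve. Qed.

Lemma E_Jf u : 0 <= E (fun x => Jf x u).
Proof.
have ie : 0 < n^-1 by rewrite invr_gt0 npos.
have := e0 => e0'.
rewrite /Jf /ai /bi (E_D HE); try psolve.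
rewrite (E_D HE); try psolve.
rewrite (E_D HE); try psolve.
repeat apply: addr_ge0; apply: E_sqk; try psolve;
  repeat apply: mulr_ge0; rewrite ?exprn_ge0 ?ltW //.
Qed.

Lemma Jeq x : C ^+ 4 / th ^+ 3 * tt x ^+ 4 + (e ^+ 3)^-1 * norm4_4 (Pi x) - norm4_4 (yy x)
  = \sum_u Jf x u.
Proof.
have thn : th != 0 by rewrite gt_eqF.
have en : e != 0 by rewrite gt_eqF // e0.
rewrite -HC4 /norm4_4 /Ex !mulr_suml !mulr_sumr -big_split -sumrB /=.
apply: eq_bigr => u _; rewrite /Jf /ai /bi /yy /e.
field; rewrite nne0 thn andbT /=; exact: en.
Qed.

Lemma E_J : E (fun x => norm4_4 (yy x)) <=
  C ^+ 4 / th ^+ 3 * E (fun x => tt x ^+ 4) + (e ^+ 3)^-1 * E (fun x => norm4_4 (Pi x)).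
Proof.
have PJ := P_J.
rewrite -subr_ge0 -!(E_Z HE); try psolve.
rewrite -(E_D HE); try psolve.
rewrite -(E_B HE); try psolve.
rewrite (Eext (Q := fun x => \sum_u Jf x u)); last exact: Jeq.
rewrite (E_sum HE); last by move=> u _; rewrite /Jf /ai /bi; psolve.
by apply: sumr_ge0 => u _; apply: E_Jf.
Qed.

End Jen.

Lemma main_bound : 1 - 4 * c / C <= E (fun x => inner x f0 ^+ 2).
Proof.
have Cp : 0 < C by apply: lt_trans HcC; rewrite mulr_gt0.
set d := c / C.
have d0 : 0 < d by rewrite divr_gt0.
have d1 : d < 1 by rewrite ltr_pdivrMr // mul1r; apply: le_lt_trans HcC; rewrite ler_peMl ?ltW // ?ler1n ?ltr1n.
have th0 : 0 < 1 - d by rewrite subr_gt0.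
have th1 : 1 - d < 1 by rewrite ltrBlDr ltrDl.
have J := E_J th0 th1.
have e_d : 1 - (1 - d) = d by rewrite opprB addrC subrK.
rewrite e_d in J.
set p := E (fun x => inner x f0 ^+ 2).
have Tp : E (fun x => tt x ^+ 4) <= p := E_t4.
have F4 := E_F4; have G4 := E_g4.
have hc : c = d * C by rewrite /d mulrAC -mulrA mulfV ?mulr1 // gt_eqF.
have key : C ^+ 4 <= C ^+ 4 / (1 - d) ^+ 3 * p + (d ^+ 3)^-1 * (c ^+ 4).
  apply: le_trans HE4 _; rewrite E_X4; apply: le_trans J _.
  apply: lerD.
    apply: ler_wpM2l Tp; apply: divr_ge0; rewrite ?exprn_ge0 // ltW //.
  apply: ler_wpM2l; first by rewrite invr_ge0 exprn_ge0 // ltW.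
  apply: le_trans F4 _; rewrite -[X in _ <= X]mulr1; apply: ler_wpM2l G4.
  by rewrite exprn_ge0 // ltW.
have key2 : (d ^+ 3)^-1 * c ^+ 4 = d * C ^+ 4.
  rewrite /d; field; by rewrite ?gt_eqF.
rewrite key2 in key.
have A0 : 0 < C ^+ 4 by rewrite exprn_gt0.
have h1 : 1 - d <= p / (1 - d) ^+ 3.
  rewrite -(ler_pM2l A0) mulrBr mulr1 lerBlDr.
  have E' : C ^+ 4 / (1 - d) ^+ 3 * p + d * C ^+ 4 = C ^+ 4 * (p / (1 - d) ^+ 3) + C ^+ 4 * d by ring.
  by rewrite -E'.
have h2 : (1 - d) ^+ 4 <= p.
  have t3 : 0 < (1 - d) ^+ 3 by rewrite exprn_gt0.
  by move: h1; rewrite ler_pdivlMr // -exprSr.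
have -> : 4 * c / C = 4 * d by rewrite /d mulrA.
apply: le_trans h2; nra.
Qed.

End Main.

Theorem lemma5p6 :
  exists K : rat, 0 < K /\
  forall (R : rcfType) (U : finType)
         (V' : (U -> R) -> Prop) (Pi : (U -> R) -> (U -> R)) (c : R),
    is_subspace V' -> is_orth_proj V' Pi -> 0 < c ->
    (exists S : (U -> R) -> R, is_poly 4 S /\ is_sos S /\
       forall f : U -> R,
         norm4_4 (Pi f) = c ^+ 4 * (norm2sq (Pi f)) ^+ 2 - S f) ->
  forall (f0 : U -> R) (C : R),
    (forall v, V' v -> inner f0 v = 0) ->
    norm2sq f0 = 1 ->
    0 <= C -> norm4_4 f0 = C ^+ 4 ->
    100 * c < C ->
  forall (V : (U -> R) -> Prop),
    (forall g, V g <-> exists v t, V' v /\ g = (fun u => v u + t * f0 u)) ->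
  forall (l : nat) (E : ((U -> R) -> R) -> R),
    (8 <= l)%N -> pseudoexp l E ->
    (forall w : U -> R, (forall v, V v -> \sum_u w u * v u = 0) ->
       forall Q, is_poly l.-1 Q ->
         E (fun x => (\sum_u w u * x u) * Q x) = 0) ->
    (forall Q, is_poly (l - 2) Q ->
       E (fun x => (norm2sq x - 1) * Q x) = 0) ->
    C ^+ 4 <= E (fun x => norm4_4 x) ->
    1 - ratr K * c / C <= E (fun x => inner x f0 ^+ 2).
Proof.
exists 4; split => //.
move=> R U V' Pi c HV' HPi c0 [S [HS4 [HSsos HSid]]] f0 C Hf0 Hf0n C0 HC4 HcC V HV l E l8 HE HEL HEN HE4.
rewrite (_ : ratr 4 = 4); last by rewrite (ratr_nat R 4).
exact: (main_bound HV' HPi c0 HS4 HSsos HSid Hf0 Hf0n C0 HC4 HcC HV l8 HE HEL HEN HE4).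
Qed.
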